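(* Let $\mathcal E$ be a finite set, $\mathcal D=2^{S}$ for a finite set $S$, and let $f_1,f_2:\mathcal E^*\to\mathcal D$ be linear mappings. Then the mappings $f_1\cap f_2$, $f_1=_?f_2$ and $f_1\subseteq_?f_2$ are linear.
   Context: $\mathcal E^*=\bigcup_{n\ge1}\mathcal E^n$ is the set of profiles; $\mathrm{Hist}(P)\in\mathbb Z_{\ge0}^{\mathcal E}$ counts occurrences of each element of $\mathcal E$ in $P$. A mapping $f:\mathcal E^*\to\mathcal D$ is linear if there exist $\vec h_1,\dots,\vec h_K\in\mathbb R^{|\mathcal E|}$ and $g:\{+,-,0\}^K\to\mathcal D$ such that $f(P)=g(\sigma_1,\dots,\sigma_K)$ where $\sigma_t$ is the sign ($+,-,0$) of $\mathrm{Hist}(P)\cdot\vec h_t$. Operations: $(f_1\cap f_2)(P)=f_1(P)\cap f_2(P)$; $(f_1=_?f_2)(P)=f_1(P)$ if $f_1(P)=f_2(P)$ and $\emptyset$ otherwise; $(f_1\subseteq_?f_2)(P)=f_1(P)$ if $f_1(P)\subseteq f_2(P)$ and $\emptyset$ otherwise. *)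

(* Defs.v *)
From mathcomp Require Import all_boot.
From Stdlib Require Import Reals.
Set Implicit Arguments. Unset Strict Implicit. Unset Printing Implicit Defensive.

Inductive sgn := SPos | SNeg | SZero.

Definition sign_of (x : R) : sgn :=
  match Rlt_dec 0 x with
  | left _ => SPos
  | right _ => match Rlt_dec x 0 with left _ => SNeg | right _ => SZero end
  end.

Definition profile (E : finType) (P : seq E) : Prop := (0 < size P)%N.

Definition Hist (E : finType) (P : seq E) (e : E) : nat := count_mem e P.

Definition hdot (E : finType) (P : seq E) (h : E -> R) : R :=
  \big[Rplus/0%R]_(e : E) (INR (Hist P e) * h e)%R.

Definition linear_map (E : finType) (D : Type) (f : seq E -> D) : Prop :=
  exists (K : nat) (h : 'I_K -> E -> R) (g : ('I_K -> sgn) -> D),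
    forall P : seq E, profile P -> f P = g (fun t => sign_of (hdot P (h t))).

Definition map_cap (E S : finType) (f1 f2 : seq E -> {set S}) : seq E -> {set S} :=
  fun P => f1 P :&: f2 P.

Definition map_eq (E S : finType) (f1 f2 : seq E -> {set S}) : seq E -> {set S} :=
  fun P => if f1 P == f2 P then f1 P else set0.

Definition map_sub (E S : finType) (f1 f2 : seq E -> {set S}) : seq E -> {set S} :=
  fun P => if f1 P \subset f2 P then f1 P else set0.

(* Main.v *)
Require Import Defs.
From mathcomp Require Import all_boot.
From Stdlib Require Import Reals.
From Stdlib Require Import FunctionalExtensionality.

Lemma lin_comb (E : finType) (D1 D2 D : Type) (f1 : seq E -> D1) (f2 : seq E -> D2)
  (op : D1 -> D2 -> D) :
  linear_map f1 -> linear_map f2 -> linear_map (fun P => op (f1 P) (f2 P)).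
Proof.
move=> [K1 [h1 [g1 H1]]] [K2 [h2 [g2 H2]]].
exists (K1 + K2)%N.
exists (fun t : 'I_(K1 + K2) => match fintype.split t with inl i => h1 i | inr j => h2 j end).
exists (fun s => op (g1 (fun i => s (unsplit (inl i))))
                  (g2 (fun j => s (unsplit (inr j))))).
move=> P HP; rewrite H1 // H2 //.
by congr op; [congr g1 | congr g2]; apply: functional_extensionality => i;
  rewrite unsplitK.
Qed.

Theorem theorem5 (E S : finType) (f1 f2 : seq E -> {set S}) :
  linear_map f1 -> linear_map f2 ->
  linear_map (map_cap f1 f2) /\ linear_map (map_eq f1 f2) /\ linear_map (map_sub f1 f2).
Proof.
move=> L1 L2; split; [|split].
- exact (@lin_comb _ _ _ _ _ _ (fun A B : {set S} => A :&: B) L1 L2).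
- exact (@lin_comb _ _ _ _ _ _ (fun A B : {set S} => if A == B then A else set0) L1 L2).
- exact (@lin_comb _ _ _ _ _ _ (fun A B : {set S} => if A \subset B then A else set0) L1 L2).
Qed.
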